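(* Let $\mathbf{u}(\mathbf{x},t)$, $p(\mathbf{x},t)$, $\theta(\mathbf{x},t)$ be smooth solutions of the dimensionless incompressible, stratified, rotating Euler equations $$\frac{D\mathbf{u}}{Dt} + 2\boldsymbol{\Omega}\times\mathbf{u} + a_0\mathbf{k}\theta = -\nabla p,\qquad \operatorname{div}\mathbf{u}=0,\qquad \frac{D\theta}{Dt}=0,$$ where $\frac{D}{Dt}=\frac{\partial}{\partial t}+\mathbf{u}\cdot\nabla$, $\boldsymbol{\Omega}$ is the constant rotation vector, $\mathbf{k}$ the vertical unit vector and $a_0$ a constant. Let $q=(\boldsymbol{\omega}+2\boldsymbol{\Omega})\cdot\nabla\theta$ with $\boldsymbol{\omega}=\operatorname{curl}\mathbf{u}$, let $Q$ be a smooth function of one variable, and set $\boldsymbol{\mathcal{B}}=\nabla Q(q)\times\nabla\theta$, $\mathcal{B}=|\boldsymbol{\mathcal{B}}|$, $\hat{\boldsymbol{\mathcal{B}}}=\boldsymbol{\mathcal{B}}/\mathcal{B}$. Define $\mathbf{a}=\boldsymbol{\mathcal{B}}\cdot\nabla\mathbf{u}$ and $\mathbf{b}=\frac{D\mathbf{a}}{Dt}$ (which equals $-P\boldsymbol{\mathcal{B}}-\boldsymbol{\mathcal{B}}\cdot\nabla(2\boldsymbol{\Omega}\times\mathbf{u}+a_0\mathbf{k}\theta)$, where $P=(\partial^2 p/\partial x_i\partial x_j)$ is the pressure Hessian), and $$\boldsymbol{\chi}_a=\mathcal{B}^{-1}(\hat{\boldsymbol{\mathcal{B}}}\times\mathbf{a}),\qquad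 \boldsymbol{\chi}_b=\mathcal{B}^{-1}(\hat{\boldsymbol{\mathcal{B}}}\times\mathbf{b}),$$ with $\chi_a=|\boldsymbol{\chi}_a|$ and $\hat{\boldsymbol{\chi}}_a=\boldsymbol{\chi}_a/\chi_a$. Then, wherever $\mathcal{B}\neq0$ and $\chi_a\neq0$, the triple $\big(\hat{\boldsymbol{\mathcal{B}}},\,\hat{\boldsymbol{\chi}}_a,\,\hat{\boldsymbol{\mathcal{B}}}\times\hat{\boldsymbol{\chi}}_a\big)$ is an orthonormal frame whose Lagrangian time derivatives satisfy $$\frac{D\hat{\boldsymbol{\mathcal{B}}}}{Dt}=\mathbf{D}_a\times\hat{\boldsymbol{\mathcal{B}}},\qquad \frac{D(\hat{\boldsymbol{\mathcal{B}}}\times\hat{\boldsymbol{\chi}}_a)}{Dt}=\mathbf{D}_a\times(\hat{\boldsymbol{\mathcal{B}}}\times\hat{\boldsymbol{\chi}}_a),\qquad \frac{D\hat{\boldsymbol{\chi}}_a}{Dt}=\mathbf{D}_a\times\hat{\boldsymbol{\chi}}_a,$$ where the Darboux angular velocity vector is $$\mathbf{D}_a=\boldsymbol{\chi}_a+\frac{c_b}{\chi_a}\hat{\boldsymbol{\mathcal{B}}},\qquad c_b=\hat{\boldsymbol{\mathcal{B}}}\cdot(\hat{\boldsymbol{\chi}}_a\times\boldsymbol{\chi}_b).$$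
   Context: All fields are smooth functions of position $\mathbf{x}\in\mathbb{R}^3$ and time $t$. $\frac{D}{Dt}=\partial_t+\mathbf{u}\cdot\nabla$ is the Lagrangian (material) time derivative along the fluid flow. For vectors, $\boldsymbol{\mathcal{B}}\cdot\nabla\mathbf{u}$ denotes the vector with components $\sum_j\mathcal{B}_j\partial_j u_i$. In this setting $\boldsymbol{\mathcal{B}}$ satisfies $\frac{D\boldsymbol{\mathcal{B}}}{Dt}=\boldsymbol{\mathcal{B}}\cdot\nabla\mathbf{u}$ and $\operatorname{div}\boldsymbol{\mathcal{B}}=0$. *)

(* Defs.v *)
From Stdlib Require Import Reals Lra.
From Coquelicot Require Import Coquelicot.
Open Scope R_scope.

Record V3 := mkV3 { v1 : R; v2 : R; v3 : R }.

Definition vadd (a b : V3) : V3 := mkV3 (v1 a + v1 b) (v2 a + v2 b) (v3 a + v3 b).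
Definition vscal (c : R) (a : V3) : V3 := mkV3 (c * v1 a) (c * v2 a) (c * v3 a).
Definition vopp (a : V3) : V3 := vscal (-1) a.
Definition dot (a b : V3) : R := v1 a * v1 b + v2 a * v2 b + v3 a * v3 b.
Definition cross (a b : V3) : V3 :=
  mkV3 (v2 a * v3 b - v3 a * v2 b)
       (v3 a * v1 b - v1 a * v3 b)
       (v1 a * v2 b - v2 a * v1 b).
Definition vnorm (a : V3) : R := sqrt (dot a a).

Definition coord (i : nat) (a : V3) : R :=
  match i with 0%nat => v1 a | 1%nat => v2 a | _ => v3 a end.
Definition basis (i : nat) : V3 :=
  match i with 0%nat => mkV3 1 0 0 | 1%nat => mkV3 0 1 0 | _ => mkV3 0 0 1 end.
Definition kvec : V3 := basis 2.

Definition sfield := V3 -> R -> R.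
Definition vfield := V3 -> R -> V3.

Definition comp (i : nat) (U : vfield) : sfield := fun x t => coord i (U x t).

Definition dx (i : nat) (f : sfield) : sfield :=
  fun x t => Derive (fun s => f (vadd x (vscal s (basis i))) t) 0.
Definition dt (f : sfield) : sfield := fun x t => Derive (fun s => f x s) t.

Definition cont4 (f : sfield) : Prop :=
  forall x t eps, 0 < eps -> exists delta, 0 < delta /\
    forall y s, Rabs (v1 y - v1 x) < delta -> Rabs (v2 y - v2 x) < delta ->
      Rabs (v3 y - v3 x) < delta -> Rabs (s - t) < delta ->
      Rabs (f y s - f x t) < eps.

Fixpoint Cn (n : nat) (f : sfield) : Prop :=
  cont4 f /\
  match n with
  | 0%nat => True
  | S m =>
      (forall i, (i < 3)%nat ->
         (forall x t, ex_derive (fun s => f (vadd x (vscal s (basis i))) t) 0)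
         /\ Cn m (dx i f))
      /\ (forall x t, ex_derive (fun s => f x s) t) /\ Cn m (dt f)
  end.

Definition smooth_s (f : sfield) : Prop := forall n, Cn n f.
Definition smooth_v (U : vfield) : Prop := forall i, (i < 3)%nat -> smooth_s (comp i U).
Definition smooth1 (Q : R -> R) : Prop := forall n x, ex_derive_n Q n x.

Definition grad (f : sfield) : vfield :=
  fun x t => mkV3 (dx 0 f x t) (dx 1 f x t) (dx 2 f x t).
Definition div (U : vfield) : sfield :=
  fun x t => dx 0 (comp 0 U) x t + dx 1 (comp 1 U) x t + dx 2 (comp 2 U) x t.
Definition curl (U : vfield) : vfield :=
  fun x t => mkV3 (dx 1 (comp 2 U) x t - dx 2 (comp 1 U) x t)
                  (dx 2 (comp 0 U) x t - dx 0 (comp 2 U) x t)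
                  (dx 0 (comp 1 U) x t - dx 1 (comp 0 U) x t).

(** (B . grad) U : components sum_j B_j d_j U_i *)
Definition dirderiv (B : vfield) (U : vfield) : vfield :=
  fun x t => mkV3 (dot (B x t) (grad (comp 0 U) x t))
                  (dot (B x t) (grad (comp 1 U) x t))
                  (dot (B x t) (grad (comp 2 U) x t)).

Definition matD (u : vfield) (f : sfield) : sfield :=
  fun x t => dt f x t + dot (u x t) (grad f x t).
Definition matDv (u : vfield) (W : vfield) : vfield :=
  fun x t => mkV3 (matD u (comp 0 W) x t) (matD u (comp 1 W) x t)
                  (matD u (comp 2 W) x t).

Section Quantities.
Variables (Omega : V3) (u : vfield) (theta : sfield) (Q : R -> R).

Definition qPV : sfield :=
  fun x t => dot (vadd (curl u x t) (vscal 2 Omega)) (grad theta x t).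
Definition Bvec : vfield :=
  fun x t => cross (grad (fun y s => Q (qPV y s)) x t) (grad theta x t).
Definition Bnorm : sfield := fun x t => vnorm (Bvec x t).
Definition Bhat : vfield := fun x t => vscal (/ Bnorm x t) (Bvec x t).
Definition avec : vfield := dirderiv Bvec u.
Definition bvec : vfield := matDv u avec.
Definition chi_a : vfield :=
  fun x t => vscal (/ Bnorm x t) (cross (Bhat x t) (avec x t)).
Definition chi_b : vfield :=
  fun x t => vscal (/ Bnorm x t) (cross (Bhat x t) (bvec x t)).
Definition chi_a_norm : sfield := fun x t => vnorm (chi_a x t).
Definition chi_a_hat : vfield := fun x t => vscal (/ chi_a_norm x t) (chi_a x t).
Definition c_b : sfield :=
  fun x t => dot (Bhat x t) (cross (chi_a_hat x t) (chi_b x t)).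
Definition Darboux_a : vfield :=
  fun x t => vadd (chi_a x t) (vscal (c_b x t / chi_a_norm x t) (Bhat x t)).
Definition third_vec : vfield := fun x t => cross (Bhat x t) (chi_a_hat x t).
End Quantities.

(* Main.v *)
Require Import Defs.
From Stdlib Require Import Reals.
From Coquelicot Require Import Coquelicot.
From Stdlib Require Import Lra Lia Nsatz FunctionalExtensionality.
Open Scope R_scope.


Lemma path0 x v : vadd x (vscal 0 v) = x.
Proof. destruct x, v; unfold vadd, vscal; simpl; f_equal; ring. Qed.

Lemma ex_derive_sqrt f x : ex_derive f x -> 0 < f x -> ex_derive (fun s => sqrt (f s)) x.
Proof. intros [l H] Hp. eexists. apply is_derive_sqrt; eauto. Qed.

Lemma Derive_sqrt f x : ex_derive f x -> 0 < f x ->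
  Derive (fun s => sqrt (f s)) x = Derive f x / (2 * sqrt (f x)).
Proof. intros H Hp. apply is_derive_unique. apply is_derive_sqrt; auto.
  apply Derive_correct; auto. Qed.

Definition diff4 (f : sfield) x t : Prop :=
  ex_derive (fun s => f x s) t /\
  forall i, (i < 3)%nat -> ex_derive (fun r => f (vadd x (vscal r (basis i))) t) 0.

Fixpoint Dk (n : nat) (f : sfield) : Prop :=
  match n with
  | 0%nat => True
  | S m => (forall y s, diff4 f y s) /\ (forall i, (i < 3)%nat -> Dk m (dx i f)) /\ Dk m (dt f)
  end.

Lemma Cn_Dk n f : Cn n f -> Dk n f.
Proof.
  revert f; induction n as [|n IH]; intros f H; simpl; auto.
  destruct H as [_ [Hi [Ht Hdt]]]. split; [|split].
  - intros y s; split; auto. intros i hi; apply (Hi i hi).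
  - intros i hi; apply IH, (Hi i hi).
  - apply IH, Hdt.
Qed.

Lemma smooth_Dk f n : smooth_s f -> Dk n f.
Proof. intros H; apply Cn_Dk, H. Qed.

Lemma Dk_S n f : Dk (S n) f -> Dk n f.
Proof.
  revert f; induction n as [|n IH]; intros f H; simpl; auto.
  destruct H as [Hd [Hi Ht]]. split; [|split].
  - intros y s. apply Hd.
  - intros i hi; apply IH, Hi, hi.
  - apply IH, Ht.
Qed.

Lemma Dk_le n m f : (m <= n)%nat -> Dk n f -> Dk m f.
Proof. induction 1; auto. intros HH; apply IHle, Dk_S, HH. Qed.


Lemma diff4_op2 (op : R -> R -> R)
  (Hop : forall (F G : R -> R) z, ex_derive F z -> ex_derive G z -> ex_derive (fun r => op (F r) (G r)) z)
  f g y s : diff4 f y s -> diff4 g y s -> diff4 (fun y s => op (f y s) (g y s)) y s.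
Proof.
  intros [Ht Hi] [Gt Gi]; split.
  - apply (Hop (fun s => f y s) (fun s => g y s)); auto.
  - intros i hi. apply (Hop (fun r => f _ s) (fun r => g _ s)); auto.
Qed.

Lemma exd_plus (F G : R -> R) z : ex_derive F z -> ex_derive G z -> ex_derive (fun r => F r + G r) z.
Proof. intros; apply (ex_derive_plus F G); auto. Qed.
Lemma exd_minus (F G : R -> R) z : ex_derive F z -> ex_derive G z -> ex_derive (fun r => F r - G r) z.
Proof. intros; apply (ex_derive_minus F G); auto. Qed.
Lemma exd_mult (F G : R -> R) z : ex_derive F z -> ex_derive G z -> ex_derive (fun r => F r * G r) z.
Proof. intros; apply (ex_derive_mult F G); auto. Qed.

Lemma diff4_plus f g y s : diff4 f y s -> diff4 g y s -> diff4 (fun y s => f y s + g y s) y s.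
Proof. apply (diff4_op2 Rplus exd_plus). Qed.
Lemma diff4_minus f g y s : diff4 f y s -> diff4 g y s -> diff4 (fun y s => f y s - g y s) y s.
Proof. apply (diff4_op2 Rminus exd_minus). Qed.
Lemma diff4_mult f g y s : diff4 f y s -> diff4 g y s -> diff4 (fun y s => f y s * g y s) y s.
Proof. apply (diff4_op2 Rmult exd_mult). Qed.
Lemma diff4_const c y s : diff4 (fun _ _ => c) y s.
Proof. split; [|intros]; apply ex_derive_const. Qed.

Lemma Dk_plus n f g : Dk n f -> Dk n g -> Dk n (fun y s => f y s + g y s).
Proof.
  revert f g; induction n as [|n IH]; intros f g Hf Hg; simpl; auto.
  destruct Hf as [Fd [Fi Ft]]; destruct Hg as [Gd [Gi Gt]]. split; [|split].
  - intros; apply diff4_plus; auto.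
  - intros i hi.
    replace (dx i (fun y s => f y s + g y s)) with (fun y s => dx i f y s + dx i g y s).
    + apply IH; auto.
    + apply functional_extensionality; intro y; apply functional_extensionality; intro s.
      unfold dx. rewrite Derive_plus; auto. apply (Fd y s), hi. apply (Gd y s), hi.
  - replace (dt (fun y s => f y s + g y s)) with (fun y s => dt f y s + dt g y s).
    + apply IH; auto.
    + apply functional_extensionality; intro y; apply functional_extensionality; intro s.
      unfold dt. rewrite Derive_plus; auto. apply (Fd y s). apply (Gd y s).
Qed.

Lemma Dk_minus n f g : Dk n f -> Dk n g -> Dk n (fun y s => f y s - g y s).
Proof.
  revert f g; induction n as [|n IH]; intros f g Hf Hg; simpl; auto.
  destruct Hf as [Fd [Fi Ft]]; destruct Hg as [Gd [Gi Gt]]. split; [|split].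
  - intros; apply diff4_minus; auto.
  - intros i hi.
    replace (dx i (fun y s => f y s - g y s)) with (fun y s => dx i f y s - dx i g y s).
    + apply IH; auto.
    + apply functional_extensionality; intro y; apply functional_extensionality; intro s.
      unfold dx. rewrite Derive_minus; auto. apply (Fd y s), hi. apply (Gd y s), hi.
  - replace (dt (fun y s => f y s - g y s)) with (fun y s => dt f y s - dt g y s).
    + apply IH; auto.
    + apply functional_extensionality; intro y; apply functional_extensionality; intro s.
      unfold dt. rewrite Derive_minus; auto. apply (Fd y s). apply (Gd y s).
Qed.

Lemma Dk_const n : forall c, Dk n (fun _ _ => c).
Proof.
  induction n as [|n IH]; intros c; simpl; auto. split; [|split].
  - intros; apply diff4_const.
  - intros i hi. replace (dx i (fun _ _ => c)) with (fun (_:V3) (_:R) => 0); auto.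
    apply functional_extensionality; intro y; apply functional_extensionality; intro s.
    unfold dx. rewrite Derive_const; auto.
  - replace (dt (fun _ _ => c)) with (fun (_:V3) (_:R) => 0); auto.
    apply functional_extensionality; intro y; apply functional_extensionality; intro s.
    unfold dt. rewrite Derive_const; auto.
Qed.

Lemma Dk_mult n f g : Dk n f -> Dk n g -> Dk n (fun y s => f y s * g y s).
Proof.
  revert f g; induction n as [|n IH]; intros f g Hf Hg; simpl; auto.
  assert (Hf' := Dk_S _ _ Hf); assert (Hg' := Dk_S _ _ Hg).
  destruct Hf as [Fd [Fi Ft]]; destruct Hg as [Gd [Gi Gt]]. split; [|split].
  - intros; apply diff4_mult; auto.
  - intros i hi.
    replace (dx i (fun y s => f y s * g y s)) with (fun y s => dx i f y s * g y s + f y s * dx i g y s).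
    + apply Dk_plus; apply IH; auto.
    + apply functional_extensionality; intro y; apply functional_extensionality; intro s.
      unfold dx. rewrite Derive_mult; auto. rewrite path0; auto. apply (Fd y s), hi. apply (Gd y s), hi.
  - replace (dt (fun y s => f y s * g y s)) with (fun y s => dt f y s * g y s + f y s * dt g y s).
    + apply Dk_plus; apply IH; auto.
    + apply functional_extensionality; intro y; apply functional_extensionality; intro s.
      unfold dt. rewrite Derive_mult; auto. apply (Fd y s). apply (Gd y s).
Qed.

Lemma smooth1_D Q : smooth1 Q -> smooth1 (Derive Q).
Proof.
  intros H.
  assert (E : forall n x, Derive_n (Derive Q) n x = Derive_n Q (S n) x).
  { induction n as [|n IH]; intros x; simpl; auto.
    apply Derive_ext; intros; apply IH. }
  intros n x. destruct n as [|n]; simpl; auto.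
  apply (ex_derive_ext (Derive_n Q (S n))). intros; symmetry; apply E.
  apply (H (S (S n)) x).
Qed.

Lemma Dk_comp n : forall Q f, smooth1 Q -> Dk n f -> Dk n (fun y s => Q (f y s)).
Proof.
  induction n as [|n IH]; intros Q f HQ Hf; simpl; auto.
  assert (Hf' := Dk_S _ _ Hf).
  assert (HQ1 : forall z, ex_derive Q z) by (intros z; apply (HQ 1%nat z)).
  destruct Hf as [Fd [Fi Ft]]. split; [|split].
  - intros y s; destruct (Fd y s) as [Ht Hi]; split.
    + apply (ex_derive_comp Q (fun s => f y s)); auto.
    + intros i hi. apply (ex_derive_comp Q (fun r => f _ s)); auto.
  - intros i hi.
    replace (dx i (fun y s => Q (f y s))) with (fun y s => Derive Q (f y s) * dx i f y s).
    + apply Dk_mult; auto. apply IH; auto. apply smooth1_D; auto.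
    + apply functional_extensionality; intro y; apply functional_extensionality; intro s.
      unfold dx. rewrite (Derive_comp Q (fun r => f _ s)); auto. rewrite path0; ring.
      apply (Fd y s), hi.
  - replace (dt (fun y s => Q (f y s))) with (fun y s => Derive Q (f y s) * dt f y s).
    + apply Dk_mult; auto. apply IH; auto. apply smooth1_D; auto.
    + apply functional_extensionality; intro y; apply functional_extensionality; intro s.
      unfold dt. rewrite (Derive_comp Q (fun r => f y r)); auto. ring.
      apply (Fd y s).
Qed.


Lemma DerP (F G : R -> R) z : ex_derive F z -> ex_derive G z -> Derive (fun r => F r + G r) z = Derive (fun r => F r) z + Derive (fun r => G r) z.
Proof. intros; apply Derive_plus; auto. Qed.
Lemma DerM (F G : R -> R) z : ex_derive F z -> ex_derive G z -> Derive (fun r => F r - G r) z = Derive (fun r => F r) z - Derive (fun r => G r) z.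
Proof. intros; apply Derive_minus; auto. Qed.
Lemma DerMul (F G : R -> R) z : ex_derive F z -> ex_derive G z -> Derive (fun r => F r * G r) z = Derive (fun r => F r) z * G z + F z * Derive (fun r => G r) z.
Proof. intros; apply Derive_mult; auto. Qed.
Lemma DerInv (F : R -> R) z : ex_derive F z -> F z <> 0 -> Derive (fun r => / F r) z = - Derive (fun r => F r) z / (F z)^2.
Proof. intros; apply Derive_inv; auto. Qed.
Lemma DerSqrt (F : R -> R) z : ex_derive F z -> 0 < F z -> Derive (fun r => sqrt (F r)) z = Derive (fun r => F r) z / (2 * sqrt (F z)).
Proof. intros; apply Derive_sqrt; auto. Qed.
Lemma DerC (c z : R) : Derive (fun _ => c) z = 0.
Proof. apply Derive_const. Qed.

Section Pt.
Variables (u : vfield) (x : V3) (t : R).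

Lemma matD_unf f : matD u f x t = Derive (fun s => f x s) t +
  (v1 (u x t) * Derive (fun r => f (vadd x (vscal r (basis 0))) t) 0 +
   v2 (u x t) * Derive (fun r => f (vadd x (vscal r (basis 1))) t) 0 +
   v3 (u x t) * Derive (fun r => f (vadd x (vscal r (basis 2))) t) 0).
Proof. reflexivity. Qed.

Ltac d4 H := let Ht := fresh in let Hi := fresh in destruct H as [Ht Hi];
  pose proof (Hi 0%nat ltac:(lia)); pose proof (Hi 1%nat ltac:(lia)); pose proof (Hi 2%nat ltac:(lia)).

Lemma matD_plus f g : diff4 f x t -> diff4 g x t ->
  matD u (fun y s => f y s + g y s) x t = matD u f x t + matD u g x t.
Proof. intros Hf Hg; d4 Hf; d4 Hg; rewrite !matD_unf, !DerP; auto; cbv beta; ring. Qed.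

Lemma matD_minus f g : diff4 f x t -> diff4 g x t ->
  matD u (fun y s => f y s - g y s) x t = matD u f x t - matD u g x t.
Proof. intros Hf Hg; d4 Hf; d4 Hg; rewrite !matD_unf, !DerM; auto; cbv beta; ring. Qed.

Lemma matD_mult f g : diff4 f x t -> diff4 g x t ->
  matD u (fun y s => f y s * g y s) x t = matD u f x t * g x t + f x t * matD u g x t.
Proof. intros Hf Hg; d4 Hf; d4 Hg; rewrite !matD_unf, !DerMul; auto; cbv beta; rewrite !path0; ring. Qed.

Lemma matD_const c : matD u (fun _ _ => c) x t = 0.
Proof. rewrite matD_unf, !DerC; ring. Qed.

Lemma matD_inv f : diff4 f x t -> f x t <> 0 ->
  matD u (fun y s => / f y s) x t = - matD u f x t / (f x t)^2.
Proof.
  intros Hf Hn; d4 Hf; rewrite !matD_unf, !DerInv; auto; try (rewrite path0; auto).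
  cbv beta; rewrite !path0. field. auto.
Qed.

Lemma matD_sqrt f : diff4 f x t -> 0 < f x t ->
  matD u (fun y s => sqrt (f y s)) x t = matD u f x t / (2 * sqrt (f x t)).
Proof.
  intros Hf Hn; assert (sqrt (f x t) <> 0) by (apply Rgt_not_eq, sqrt_lt_R0; auto).
  d4 Hf; rewrite !matD_unf, !DerSqrt; auto; try (rewrite path0; auto).
  cbv beta; rewrite !path0. field. auto.
Qed.

Lemma diff4_inv f : diff4 f x t -> f x t <> 0 -> diff4 (fun y s => / f y s) x t.
Proof.
  intros [Ht Hi] Hn; split.
  - apply (ex_derive_inv (fun s => f x s)); auto.
  - intros i hi; apply (ex_derive_inv (fun r => f _ t)); auto. rewrite path0; auto.
Qed.

Lemma diff4_sqrt f : diff4 f x t -> 0 < f x t -> diff4 (fun y s => sqrt (f y s)) x t.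
Proof.
  intros [Ht Hi] Hn; split.
  - apply (ex_derive_sqrt (fun s => f x s)); auto.
  - intros i hi; apply (ex_derive_sqrt (fun r => f _ t)); auto. rewrite path0; auto.
Qed.

Definition vd4 (W : vfield) := diff4 (fun y s => v1 (W y s)) x t /\
  diff4 (fun y s => v2 (W y s)) x t /\ diff4 (fun y s => v3 (W y s)) x t.

Lemma matDv_eq W : matDv u W x t = mkV3 (matD u (fun y s => v1 (W y s)) x t)
  (matD u (fun y s => v2 (W y s)) x t) (matD u (fun y s => v3 (W y s)) x t).
Proof. reflexivity. Qed.

Lemma vd4_scal f W : diff4 f x t -> vd4 W -> vd4 (fun y s => vscal (f y s) (W y s)).
Proof. intros Hf [H1 [H2 H3]]; unfold vd4; cbn [v1 v2 v3 vscal]; split; [|split];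
  apply diff4_mult; assumption. Qed.

Lemma vd4_cross V W : vd4 V -> vd4 W -> vd4 (fun y s => cross (V y s) (W y s)).
Proof. intros [H1 [H2 H3]] [G1 [G2 G3]]; unfold vd4; cbn [v1 v2 v3 cross]; split; [|split];
  apply diff4_minus; apply diff4_mult; assumption. Qed.

Lemma diff4_dot V W : vd4 V -> vd4 W -> diff4 (fun y s => dot (V y s) (W y s)) x t.
Proof. intros [H1 [H2 H3]] [G1 [G2 G3]]; unfold dot;
  apply diff4_plus; [apply diff4_plus|]; apply diff4_mult; assumption. Qed.

Lemma matDv_scal f W : diff4 f x t -> vd4 W ->
  matDv u (fun y s => vscal (f y s) (W y s)) x t =
  vadd (vscal (matD u f x t) (W x t)) (vscal (f x t) (matDv u W x t)).
Proof.
  intros Hf [H1 [H2 H3]]. rewrite !matDv_eq. cbn [v1 v2 v3 vscal vadd].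
  rewrite (matD_mult f (fun y s => v1 (W y s))), (matD_mult f (fun y s => v2 (W y s))),
    (matD_mult f (fun y s => v3 (W y s))); auto.
Qed.

Lemma matD_mm a b c d : diff4 a x t -> diff4 b x t -> diff4 c x t -> diff4 d x t ->
  matD u (fun y s => a y s * b y s - c y s * d y s) x t =
  (matD u a x t * b x t + a x t * matD u b x t) - (matD u c x t * d x t + c x t * matD u d x t).
Proof.
  intros. rewrite (matD_minus (fun y s => a y s * b y s) (fun y s => c y s * d y s)),
    (matD_mult a b), (matD_mult c d); auto; apply diff4_mult; assumption.
Qed.

Lemma matD_ppp a b c d e f : diff4 a x t -> diff4 b x t -> diff4 c x t -> diff4 d x t ->
  diff4 e x t -> diff4 f x t ->
  matD u (fun y s => a y s * b y s + c y s * d y s + e y s * f y s) x t =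
  (matD u a x t * b x t + a x t * matD u b x t) + (matD u c x t * d x t + c x t * matD u d x t)
  + (matD u e x t * f x t + e x t * matD u f x t).
Proof.
  intros Ha Hb Hc Hd He Hf.
  pose proof (diff4_mult a b x t Ha Hb) as Hab. pose proof (diff4_mult c d x t Hc Hd) as Hcd.
  pose proof (diff4_mult e f x t He Hf) as Hef.
  pose proof (diff4_plus _ _ x t Hab Hcd) as Habcd.
  rewrite (matD_plus (fun y s => a y s * b y s + c y s * d y s) (fun y s => e y s * f y s) Habcd Hef).
  rewrite (matD_plus (fun y s => a y s * b y s) (fun y s => c y s * d y s) Hab Hcd).
  rewrite (matD_mult a b Ha Hb), (matD_mult c d Hc Hd), (matD_mult e f He Hf).
  reflexivity.
Qed.

Lemma matDv_cross V W : vd4 V -> vd4 W ->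
  matDv u (fun y s => cross (V y s) (W y s)) x t =
  vadd (cross (matDv u V x t) (W x t)) (cross (V x t) (matDv u W x t)).
Proof.
  intros [H1 [H2 H3]] [G1 [G2 G3]]. rewrite !matDv_eq. cbn [v1 v2 v3 cross vadd].
  rewrite (matD_mm (fun y s => v2 (V y s)) (fun y s => v3 (W y s)) (fun y s => v3 (V y s)) (fun y s => v2 (W y s))),
    (matD_mm (fun y s => v3 (V y s)) (fun y s => v1 (W y s)) (fun y s => v1 (V y s)) (fun y s => v3 (W y s))),
    (matD_mm (fun y s => v1 (V y s)) (fun y s => v2 (W y s)) (fun y s => v2 (V y s)) (fun y s => v1 (W y s)));
    try assumption.
  unfold vadd, cross; cbn [v1 v2 v3]; f_equal; ring.
Qed.

Lemma matD_dot V W : vd4 V -> vd4 W ->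
  matD u (fun y s => dot (V y s) (W y s)) x t =
  dot (matDv u V x t) (W x t) + dot (V x t) (matDv u W x t).
Proof.
  intros [H1 [H2 H3]] [G1 [G2 G3]]. rewrite !matDv_eq. unfold dot; cbn [v1 v2 v3].
  rewrite (matD_ppp (fun y s => v1 (V y s)) (fun y s => v1 (W y s)) (fun y s => v2 (V y s)) (fun y s => v2 (W y s))
     (fun y s => v3 (V y s)) (fun y s => v3 (W y s))); try assumption.
  ring.
Qed.
End Pt.


Lemma Dk_dx n i f : (i < 3)%nat -> Dk (S n) f -> Dk n (dx i f).
Proof. intros hi H. apply (proj1 (proj2 H) i hi). Qed.

Lemma Dk_cp n f g i j k l : (i < 3)%nat -> (j < 3)%nat -> (k < 3)%nat -> (l < 3)%nat ->
  Dk (S n) f -> Dk (S n) g ->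
  Dk n (fun y s => dx i f y s * dx j g y s - dx k f y s * dx l g y s).
Proof.
  intros. apply Dk_minus; apply Dk_mult; apply Dk_dx; auto.
Qed.

Lemma Dk_ppp n a b c d e f : Dk n a -> Dk n b -> Dk n c -> Dk n d -> Dk n e -> Dk n f ->
  Dk n (fun y s => a y s * b y s + c y s * d y s + e y s * f y s).
Proof.
  intros. apply Dk_plus; [apply Dk_plus|]; apply Dk_mult; assumption.
Qed.

Section Smooth.
Variables (Omega : V3) (u : vfield) (theta : sfield) (Q : R -> R).
Hypotheses (Hu : smooth_v u) (Htheta : smooth_s theta) (HQ : smooth1 Q).

Lemma Dk_u n i : (i < 3)%nat -> Dk n (Defs.comp i u).
Proof. intros hi; exact (smooth_Dk _ n (Hu i hi)). Qed.

Lemma Dk_q n : Dk n (qPV Omega u theta).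
Proof.
  change (Dk n (fun y s =>
    (dx 1 (Defs.comp 2 u) y s - dx 2 (Defs.comp 1 u) y s + 2 * v1 Omega) * dx 0 theta y s +
    (dx 2 (Defs.comp 0 u) y s - dx 0 (Defs.comp 2 u) y s + 2 * v2 Omega) * dx 1 theta y s +
    (dx 0 (Defs.comp 1 u) y s - dx 1 (Defs.comp 0 u) y s + 2 * v3 Omega) * dx 2 theta y s)).
  apply Dk_ppp; try (apply Dk_dx; [lia| apply smooth_Dk; auto]);
  apply Dk_plus; try apply Dk_const; apply Dk_minus; apply Dk_dx; try lia; apply Dk_u; lia.
Qed.

Lemma Dk_G n : Dk n (fun y s => Q (qPV Omega u theta y s)).
Proof. apply Dk_comp; auto. apply Dk_q. Qed.

Lemma Dk_B n : Dk n (fun y s => v1 (Bvec Omega u theta Q y s)) /\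
  Dk n (fun y s => v2 (Bvec Omega u theta Q y s)) /\ Dk n (fun y s => v3 (Bvec Omega u theta Q y s)).
Proof.
  split; [|split]; apply Dk_cp; try lia; try apply Dk_G; apply smooth_Dk; auto.
Qed.

Lemma Dk_A n : Dk n (fun y s => v1 (avec Omega u theta Q y s)) /\
  Dk n (fun y s => v2 (avec Omega u theta Q y s)) /\ Dk n (fun y s => v3 (avec Omega u theta Q y s)).
Proof.
  destruct (Dk_B n) as [B1 [B2 B3]].
  split; [|split]; apply Dk_ppp; try assumption; apply Dk_dx; try lia; apply Dk_u; lia.
Qed.

Lemma vd4_B x t : vd4 x t (Bvec Omega u theta Q).
Proof. destruct (Dk_B 1) as [B1 [B2 B3]]. split; [|split]; [apply B1|apply B2|apply B3]. Qed.

Lemma vd4_A x t : vd4 x t (avec Omega u theta Q).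
Proof. destruct (Dk_A 1) as [B1 [B2 B3]]. split; [|split]; [apply B1|apply B2|apply B3]. Qed.
End Smooth.


Ltac vds := repeat match goal with v : V3 |- _ => let a1 := fresh "c" in let a2 := fresh "c" in let a3 := fresh "c" in destruct v as [a1 a2 a3] end;
  unfold dot, vadd, vscal, cross in *; cbn [v1 v2 v3] in *.

Lemma decomp e1 e2 v : dot e1 e1 = 1 -> dot e2 e2 = 1 -> dot e1 e2 = 0 -> dot e1 v = 0 ->
  vadd v (vscal (- dot e2 v) e2) = vscal (dot e1 (cross e2 v)) (cross e1 e2).
Proof. vds. intros H1 H2 H3 H4. f_equal; nsatz. Qed.

Definition bh B n := vscal (/ n) B.
Definition chi B a n := vscal (/ n) (cross (bh B n) a).
Definition chih B a n k := vscal (/ k) (chi B a n).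
Definition chib B b n := vscal (/ n) (cross (bh B n) b).
Definition cbv_ B a b n k := dot (bh B n) (cross (chih B a n k) (chib B b n)).
Definition Da B a b n k := vadd (chi B a n) (vscal (cbv_ B a b n k / k) (bh B n)).
Definition dinv B a n := - ((dot a B + dot B a) / (2 * n)) / n ^ 2.
Definition DBh B a n := vadd (vscal (dinv B a n) B) (vscal (/ n) a).
Definition Dchi B a b n := vadd (vscal (dinv B a n) (cross (bh B n) a))
   (vscal (/ n) (vadd (cross (DBh B a n) a) (cross (bh B n) b))).
Definition Dchih B a b n k := vadd (vscal (- ((dot (Dchi B a b n) (chi B a n) + dot (chi B a n) (Dchi B a b n)) / (2 * k)) / k ^ 2) (chi B a n))
   (vscal (/ k) (Dchi B a b n)).


Lemma F1 (B a b : V3) (n k : R) (Hn : n <> 0) (Hnn : n * n = dot B B) (Hk : k <> 0) (Hkk : k * k = dot (chi B a n) (chi B a n)) : dot (bh B n) (bh B n) = 1.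
Proof.
  assert (E : dot (bh B n) (bh B n) = / n * / n * dot B B) by (unfold bh; vds; ring).
  rewrite E, <- Hnn; field; auto.
Qed.

Lemma F2 (B a b : V3) (n k : R) (Hn : n <> 0) (Hnn : n * n = dot B B) (Hk : k <> 0) (Hkk : k * k = dot (chi B a n) (chi B a n)) : DBh B a n = vscal (/ n) (vadd a (vscal (- dot a (bh B n)) (bh B n))).
Proof. unfold DBh, dinv, bh; vds; f_equal; field; auto. Qed.

Lemma G1 (B a b : V3) (n k : R) (Hn : n <> 0) (Hnn : n * n = dot B B) (Hk : k <> 0) (Hkk : k * k = dot (chi B a n) (chi B a n)) : DBh B a n = cross (Da B a b n k) (bh B n).
Proof.
  rewrite (F2 B a b n k); auto. unfold Da.
  assert (E : forall c s e, cross (vadd c (vscal s e)) e = cross c e) by (intros; vds; f_equal; ring).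
  rewrite E. unfold chi.
  assert (E2 : forall m e a, cross (vscal m (cross e a)) e = vscal m (vadd (vscal (dot e e) a) (vscal (- dot a e) e)))
    by (intros; vds; f_equal; ring).
  rewrite E2, (F1 B a b n k); auto. f_equal. vds. f_equal; ring.
Qed.

Lemma F5 (B a b : V3) (n k : R) (Hn : n <> 0) (Hnn : n * n = dot B B) (Hk : k <> 0) (Hkk : k * k = dot (chi B a n) (chi B a n)) : Dchi B a b n = vadd (chib B b n) (vscal (- (2 * (/ n) * dot (bh B n) a)) (chi B a n)).
Proof. unfold Dchi, chib, chi, DBh, dinv, bh; vds; f_equal; field; auto. Qed.

Lemma F6 (B a b : V3) (n k : R) (Hn : n <> 0) (Hnn : n * n = dot B B) (Hk : k <> 0) (Hkk : k * k = dot (chi B a n) (chi B a n)) : dot (chih B a n k) (chih B a n k) = 1.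
Proof.
  assert (E : dot (chih B a n k) (chih B a n k) = / k * / k * dot (chi B a n) (chi B a n)) by (unfold chih; vds; ring).
  rewrite E, <- Hkk; field; auto.
Qed.

Lemma F7 (B a b : V3) (n k : R) (Hn : n <> 0) (Hnn : n * n = dot B B) (Hk : k <> 0) (Hkk : k * k = dot (chi B a n) (chi B a n)) : dot (bh B n) (chih B a n k) = 0.
Proof. unfold chih, chi; vds; ring. Qed.

Lemma F8 (B a b : V3) (n k : R) (Hn : n <> 0) (Hnn : n * n = dot B B) (Hk : k <> 0) (Hkk : k * k = dot (chi B a n) (chi B a n)) : dot (bh B n) (chib B b n) = 0.
Proof. unfold chib; vds; ring. Qed.

Lemma G2 (B a b : V3) (n k : R) (Hn : n <> 0) (Hnn : n * n = dot B B) (Hk : k <> 0) (Hkk : k * k = dot (chi B a n) (chi B a n)) : Dchih B a b n k = cross (Da B a b n k) (chih B a n k).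
Proof.
  unfold Dchih. rewrite (F5 B a b n k); auto.
  set (p := chib B b n). set (q := chi B a n). set (l := - (2 * / n * dot (bh B n) a)).
  assert (E1 : dot (vadd p (vscal l q)) q + dot q (vadd p (vscal l q)) = dot p q + dot q p + 2 * l * dot q q)
    by (vds; ring).
  rewrite E1. fold q in Hkk. rewrite <- Hkk.
  assert (E2 : vadd (vscal (- ((dot p q + dot q p + 2 * l * (k * k)) / (2 * k)) / k ^ 2) q) (vscal (/ k) (vadd p (vscal l q)))
     = vscal (/ k) (vadd p (vscal (- dot (vscal (/ k) q) p) (vscal (/ k) q)))) by (vds; f_equal; field; auto).
  rewrite E2. unfold Da. fold q.
  change (vscal (/ k) q) with (chih B a n k).
  rewrite (decomp (bh B n) (chih B a n k) p (F1 B a b n k Hn Hnn Hk Hkk) (F6 B a b n k Hn Hnn Hk Hkk) (F7 B a b n k Hn Hnn Hk Hkk) (F8 B a b n k Hn Hnn Hk Hkk)).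
  assert (E3 : forall c s e r, cross (vadd c (vscal s e)) (vscal r c) = vscal s (cross e (vscal r c)))
    by (intros; vds; f_equal; ring).
  unfold chih. fold q. rewrite E3. unfold cbv_, chih. fold q. fold p.
  vds. f_equal; field; auto.
Qed.

Lemma G3 (B a b : V3) (n k : R) (Hn : n <> 0) (Hnn : n * n = dot B B) (Hk : k <> 0) (Hkk : k * k = dot (chi B a n) (chi B a n)) : vadd (cross (DBh B a n) (chih B a n k)) (cross (bh B n) (Dchih B a b n k)) =
  cross (Da B a b n k) (cross (bh B n) (chih B a n k)).
Proof.
  rewrite (G1 B a b n k), (G2 B a b n k); auto. generalize (Da B a b n k) (bh B n) (chih B a n k). intros; vds; f_equal; ring.
Qed.

Lemma G0 (B a b : V3) (n k : R) (Hn : n <> 0) (Hnn : n * n = dot B B) (Hk : k <> 0) (Hkk : k * k = dot (chi B a n) (chi B a n)) : dot (bh B n) (bh B n) = 1 /\ dot (chih B a n k) (chih B a n k) = 1 /\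
  dot (cross (bh B n) (chih B a n k)) (cross (bh B n) (chih B a n k)) = 1 /\
  dot (bh B n) (chih B a n k) = 0 /\ dot (bh B n) (cross (bh B n) (chih B a n k)) = 0 /\
  dot (chih B a n k) (cross (bh B n) (chih B a n k)) = 0.
Proof.
  assert (L : forall p q, dot (cross p q) (cross p q) = dot p p * dot q q - dot p q * dot p q) by (intros; vds; ring).
  assert (T1 : forall p q, dot p (cross p q) = 0) by (intros; vds; ring).
  assert (T2 : forall p q, dot q (cross p q) = 0) by (intros; vds; ring).
  rewrite L, (F1 B a b n k), (F6 B a b n k), (F7 B a b n k), T1, T2; auto. repeat split; ring.
Qed.


Lemma dot_ge0 v : 0 <= dot v v.
Proof. destruct v as [a b c]; unfold dot; cbn [v1 v2 v3]; nra. Qed.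

Lemma sqrt_ne0_pos z : sqrt z <> 0 -> 0 < z.
Proof. intros H. destruct (Rlt_or_le 0 z) as [h|h]; auto. exfalso; apply H, sqrt_neg_0; auto. Qed.

Theorem theorem1
  (Omega : V3) (a0 : R) (u : vfield) (p theta : sfield) (Q : R -> R)
  (Hu : smooth_v u) (Hp : smooth_s p) (Htheta : smooth_s theta) (HQ : smooth1 Q)
  (Hmom : forall x t,
     vadd (vadd (matDv u u x t) (cross (vscal 2 Omega) (u x t)))
          (vscal (a0 * theta x t) kvec) = vopp (grad p x t))
  (Hdiv : forall x t, div u x t = 0)
  (Htheta_adv : forall x t, matD u theta x t = 0)
  (HBevol : forall x t, matDv u (Bvec Omega u theta Q) x t
                        = dirderiv (Bvec Omega u theta Q) u x t)
  (HBdiv : forall x t, div (Bvec Omega u theta Q) x t = 0) :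
  forall x t,
    Bnorm Omega u theta Q x t <> 0 ->
    chi_a_norm Omega u theta Q x t <> 0 ->
    let Bh := Bhat Omega u theta Q in
    let Xh := chi_a_hat Omega u theta Q in
    let Th := third_vec Omega u theta Q in
    let Da := Darboux_a Omega u theta Q x t in
    (dot (Bh x t) (Bh x t) = 1 /\ dot (Xh x t) (Xh x t) = 1 /\
     dot (Th x t) (Th x t) = 1 /\ dot (Bh x t) (Xh x t) = 0 /\
     dot (Bh x t) (Th x t) = 0 /\ dot (Xh x t) (Th x t) = 0) /\
    matDv u Bh x t = cross Da (Bh x t) /\
    matDv u Th x t = cross Da (Th x t) /\
    matDv u Xh x t = cross Da (Xh x t).
Proof.
  intros x t HBn Hkn. cbv zeta.
  pose (B := Bvec Omega u theta Q). pose (A := avec Omega u theta Q).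
  pose (N2 := fun y s => dot (B y s) (B y s)).
  pose (Nf := fun y s => sqrt (N2 y s)).
  pose (I := fun y s => / Nf y s).
  pose (Bh := fun y s => vscal (I y s) (B y s)).
  pose (Ch := fun y s => vscal (I y s) (cross (Bh y s) (A y s))).
  pose (K2 := fun y s => dot (Ch y s) (Ch y s)).
  pose (Kf := fun y s => sqrt (K2 y s)).
  pose (IK := fun y s => / Kf y s).
  pose (Chh := fun y s => vscal (IK y s) (Ch y s)).
  pose (n := Nf x t). pose (k := Kf x t).
  assert (hn : n <> 0) by exact HBn.
  assert (hk : k <> 0) by exact Hkn.
  assert (hN2 : 0 < N2 x t) by (apply sqrt_ne0_pos; exact hn).
  assert (hK2 : 0 < K2 x t) by (apply sqrt_ne0_pos; exact hk).
  assert (hnn : n * n = dot (B x t) (B x t)) by (apply sqrt_sqrt, dot_ge0).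
  assert (hkk : k * k = dot (chi (B x t) (A x t) n) (chi (B x t) (A x t) n)) by (apply sqrt_sqrt, dot_ge0).
  assert (vB : vd4 x t B) by (apply vd4_B; auto).
  assert (vA : vd4 x t A) by (apply vd4_A; auto).
  assert (dN2 : diff4 N2 x t) by exact (diff4_dot x t B B vB vB).
  assert (dNf : diff4 Nf x t) by exact (diff4_sqrt x t N2 dN2 hN2).
  assert (dI : diff4 I x t) by exact (diff4_inv x t Nf dNf hn).
  assert (vBh : vd4 x t Bh) by exact (vd4_scal x t I B dI vB).
  assert (vBhA : vd4 x t (fun y s => cross (Bh y s) (A y s))) by exact (vd4_cross x t Bh A vBh vA).
  assert (vCh : vd4 x t Ch) by exact (vd4_scal x t I _ dI vBhA).
  assert (dK2 : diff4 K2 x t) by exact (diff4_dot x t Ch Ch vCh vCh).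
  assert (dKf : diff4 Kf x t) by exact (diff4_sqrt x t K2 dK2 hK2).
  assert (dIK : diff4 IK x t) by exact (diff4_inv x t Kf dKf hk).
  assert (vChh : vd4 x t Chh) by exact (vd4_scal x t IK Ch dIK vCh).
  assert (HDB : matDv u B x t = A x t) by exact (HBevol x t).
  assert (HDA : matDv u A x t = bvec Omega u theta Q x t) by reflexivity.
  assert (HdN2 : matD u N2 x t = dot (matDv u B x t) (B x t) + dot (B x t) (matDv u B x t))
    by exact (matD_dot u x t B B vB vB).
  assert (HdNf : matD u Nf x t = matD u N2 x t / (2 * sqrt (N2 x t)))
    by exact (matD_sqrt u x t N2 dN2 hN2).
  assert (HdI : matD u I x t = - matD u Nf x t / (Nf x t) ^ 2)
    by exact (matD_inv u x t Nf dNf hn).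
  assert (HDBh : matDv u Bh x t = DBh (B x t) (A x t) n).
  { assert (E : matDv u Bh x t = vadd (vscal (matD u I x t) (B x t)) (vscal (I x t) (matDv u B x t)))
      by exact (matDv_scal u x t I B dI vB).
    rewrite E, HdI, HdNf, HdN2, HDB. reflexivity. }
  assert (HDCh : matDv u Ch x t = Dchi (B x t) (A x t) (bvec Omega u theta Q x t) n).
  { assert (E : matDv u Ch x t = vadd (vscal (matD u I x t) (cross (Bh x t) (A x t)))
        (vscal (I x t) (matDv u (fun y s => cross (Bh y s) (A y s)) x t)))
      by exact (matDv_scal u x t I _ dI vBhA).
    assert (E2 : matDv u (fun y s => cross (Bh y s) (A y s)) x t =
       vadd (cross (matDv u Bh x t) (A x t)) (cross (Bh x t) (matDv u A x t)))
      by exact (matDv_cross u x t Bh A vBh vA).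
    rewrite E, E2, HDBh, HDA, HdI, HdNf, HdN2, HDB. reflexivity. }
  assert (HdK2 : matD u K2 x t = dot (matDv u Ch x t) (Ch x t) + dot (Ch x t) (matDv u Ch x t))
    by exact (matD_dot u x t Ch Ch vCh vCh).
  assert (HdKf : matD u Kf x t = matD u K2 x t / (2 * sqrt (K2 x t)))
    by exact (matD_sqrt u x t K2 dK2 hK2).
  assert (HdIK : matD u IK x t = - matD u Kf x t / (Kf x t) ^ 2)
    by exact (matD_inv u x t Kf dKf hk).
  assert (HDChh : matDv u Chh x t = Dchih (B x t) (A x t) (bvec Omega u theta Q x t) n k).
  { assert (E : matDv u Chh x t = vadd (vscal (matD u IK x t) (Ch x t)) (vscal (IK x t) (matDv u Ch x t)))
      by exact (matDv_scal u x t IK Ch dIK vCh).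
    rewrite E, HdIK, HdKf, HdK2, HDCh. reflexivity. }
  assert (HDTh : matDv u (third_vec Omega u theta Q) x t =
     vadd (cross (DBh (B x t) (A x t) n) (chih (B x t) (A x t) n k))
          (cross (bh (B x t) n) (Dchih (B x t) (A x t) (bvec Omega u theta Q x t) n k))).
  { assert (E : matDv u (third_vec Omega u theta Q) x t =
       vadd (cross (matDv u Bh x t) (Chh x t)) (cross (Bh x t) (matDv u Chh x t)))
      by exact (matDv_cross u x t Bh Chh vBh vChh).
    rewrite E, HDBh, HDChh. reflexivity. }
  split; [|split; [|split]].
  - exact (G0 (B x t) (A x t) (bvec Omega u theta Q x t) n k hn hnn hk hkk).
  - change (matDv u Bh x t = cross (Da (B x t) (A x t) (bvec Omega u theta Q x t) n k) (bh (B x t) n)).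
    rewrite HDBh. exact (G1 (B x t) (A x t) (bvec Omega u theta Q x t) n k hn hnn hk hkk).
  - rewrite HDTh. exact (G3 (B x t) (A x t) (bvec Omega u theta Q x t) n k hn hnn hk hkk).
  - change (matDv u Chh x t = cross (Da (B x t) (A x t) (bvec Omega u theta Q x t) n k) (chih (B x t) (A x t) n k)).
    rewrite HDChh. exact (G2 (B x t) (A x t) (bvec Omega u theta Q x t) n k hn hnn hk hkk).
Qed.
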